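(* Let $G(a,b,\lambda)$ and $H(a,b,\lambda)$ be polynomials in $a,b$ whose coefficients are Laurent polynomials in $\lambda$, and let $g=G(\varphi,\varphi',\lambda)$, $h=H(\varphi,\varphi',\lambda)$ (with $\varphi=\varphi(\lambda)$, $\varphi'=d\varphi/d\lambda$) be formal series in $\lambda$ of lowest order $\ge1$, i.e. containing only positive powers of $\lambda$. Then $$[\partial_g,\partial_h]=\partial_{\{g,h\}},\qquad \{g,h\}=h_\varphi\,g-g_\varphi\,h+h_{\varphi'}\,D_\lambda g-g_{\varphi'}\,D_\lambda h,$$ where $g_\varphi=(\partial G/\partial a)(\varphi,\varphi',\lambda)$, $g_{\varphi'}=(\partial G/\partial b)(\varphi,\varphi',\lambda)$ (similarly for $h$), and $D_\lambda$ denotes the derivative $d/d\lambda$ of a formal series in $\lambda$.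
   Context: $\varphi^{(1)},\varphi^{(2)},\dots$ are independent variables and $\varphi(\lambda)=1/\lambda+\sum_{k\ge1}\varphi^{(k)}\lambda^k$, a formal Laurent series with coefficients in $R=\mathbb R[\varphi^{(1)},\varphi^{(2)},\dots]$. For a series $f=\sum_{i\ge1}f^{(i)}\lambda^i$ with $f^{(i)}\in R$, $\partial_f$ denotes the derivation $\sum_{i\ge1}f^{(i)}\partial/\partial\varphi^{(i)}$ of $R$, acting on series coefficientwise. *)

(* Defs.v *)
From HB Require Import structures.
From mathcomp Require Import all_boot all_order all_algebra.
From mathcomp Require Import finmap.
From mathcomp Require Import monalg.
From mathcomp Require Import reals.

Set Implicit Arguments.
Unset Strict Implicit.
Unset Printing Implicit Defensive.

Import Order.TTheory GRing.Theory Num.Theory.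
Local Open Scope ring_scope.

Section Defs.
Variable F : realType.

(* The coefficient ring R = F[phi^(1), phi^(2), ...]: commutative polynomials
   with variables indexed by nat.  The variable with index k is phi^(k+1). *)
Definition Rphi := {malg F[cmonom nat]}.

Definition phivar (k : nat) : Rphi := << ucm k >>.

Definition pdv (k : nat) (r : Rphi) : Rphi :=
  \sum_(m <- msupp r) << (r@_m * (m k)%:R) *g divcm m (ucm k) >>.

Definition vars (r : Rphi) : {fset nat} :=
  (\bigcup_(m <- msupp r) finsupp (cmonom_val m))%fset.

(* Formal Laurent series in lambda with coefficients in R:
   LSer N a  stands for  \sum_(n >= 0) a n * lambda^(n - N). *)
Record lser := LSer { lsh : nat ; lco : nat -> Rphi }.

Definition lcoef (s : lser) (m : int) : Rphi :=
  match (m + (lsh s)%:Z)%R with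
  | Posz n => lco s n
  | Negz _ => 0
  end.

Definition lraise (k : nat) (s : lser) : lser :=
  LSer (lsh s + k) (fun n => if (k <= n)%N then lco s (n - k) else 0).

Definition ladd (s t : lser) : lser :=
  let N := maxn (lsh s) (lsh t) in
  LSer N (fun n => lco (lraise (N - lsh s) s) n + lco (lraise (N - lsh t) t) n).

Definition lopp (s : lser) : lser := LSer (lsh s) (fun n => - lco s n).

Definition lsub (s t : lser) : lser := ladd s (lopp t).

Definition lmul (s t : lser) : lser :=
  LSer (lsh s + lsh t) (fun n => \sum_(i < n.+1) lco s i * lco t (n - i)).

Definition lzero : lser := LSer 0 (fun _ => 0).

Definition lampowN (N : nat) : lser := LSer N (fun n => if n == 0%N then 1 else 0).

Definition lD (s : lser) : lser :=
  LSer (lsh s).+1 (fun n => ((n%:Z - (lsh s)%:Z)%R)%:~R * lco s n).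

Definition lpoly (q : {poly F}) : lser := LSer 0 (fun n => (q`_n)%:A).

Definition lhorner (c : seq lser) (x : lser) : lser :=
  foldr (fun a acc => ladd a (lmul acc x)) lzero c.

(* phi(lambda) = 1/lambda + \sum_(k >= 1) phi^(k) lambda^k *)
Definition phi : lser :=
  LSer 1 (fun n => match n with 0 => 1 | 1 => 0 | k.+2 => phivar k end).

(* A polynomial G(a,b,lambda) in a, b whose coefficients are Laurent polynomials
   in lambda, written as lambda^(-gsh) * gpol(a,b,lambda), where
   gpol = \sum_i (\sum_j (\sum_k c_ijk lambda^k) b^j) a^i. *)
Record gpoly := GPoly { gsh : nat ; gpol : {poly {poly {poly F}}} }.

Definition gda (G : gpoly) : gpoly := GPoly (gsh G) (gpol G)^`().
Definition gdb (G : gpoly) : gpoly := GPoly (gsh G) (map_poly (@deriv _) (gpol G)).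

Definition gev (G : gpoly) : lser :=
  lmul (lampowN (gsh G))
    (lhorner (map (fun Q : {poly {poly F}} => lhorner (map lpoly (polyseq Q)) (lD phi))
                  (polyseq (gpol G))) phi).

Definition posord (s : lser) : Prop := forall m : int, m <= 0 -> lcoef s m = 0.

(* the derivation  d_f = \sum_(i >= 1) f^(i) d/d phi^(i)  of R
   (only the finitely many variables occurring in r contribute) *)
Definition pder (f : lser) (r : Rphi) : Rphi :=
  \sum_(k <- vars r) lcoef f (k.+1)%:Z * pdv k r.

Definition gbracket (G H : gpoly) : lser :=
  let g := gev G in let h := gev H in
  ladd (lsub (lmul (gev (gda H)) g) (lmul (gev (gda G)) h))
       (lsub (lmul (gev (gdb H)) (lD g)) (lmul (gev (gdb G)) (lD h))).

End Defs.

(* Main.v *)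
Require Import Defs.
From HB Require Import structures.
From mathcomp Require Import all_boot all_order all_algebra.
From mathcomp Require Import finmap monalg reals.
From mathcomp Require Import boolp.
From mathcomp Require Import zify ring.
Set Implicit Arguments.
Unset Strict Implicit.
Unset Printing Implicit Defensive.
Import Order.TTheory GRing.Theory Num.Theory.
Local Open Scope fset_scope.
Local Open Scope ring_scope.
Record LS (R : comNzRingType) := mkL {
  lf : int -> R ;
  lb : exists N : nat, forall m : int, m < - (N%:Z) -> lf m = 0 }.

Section LRing.
Variable R : comNzRingType.
Local Notation L := (LS R).

Lemma L_ext (x y : L) : lf x =1 lf y -> x = y.
Proof.
case: x y => f pf [g pg] /= /funext E; subst g.
by congr mkL; apply: Prop_irrelevance.
Qed.

HB.instance Definition _ := gen_eqMixin L.
HB.instance Definition _ := gen_choiceMixin L.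

Definition bnd (x : L) : nat := proj1_sig (cid (lb x)).
Lemma bndP (x : L) m : m < - (bnd x)%:Z -> lf x m = 0.
Proof. exact: (proj2_sig (cid (lb x))). Qed.

Definition vanish (f : int -> R) (N : nat) := forall m : int, m < - (N%:Z) -> f m = 0.

Lemma vanishW f N N' : (N <= N')%N -> vanish f N -> vanish f N'.
Proof. by move=> le h m hm; apply: h; lia. Qed.

Definition conv (f g : int -> R) (N M : nat) (m : int) : R :=
  match m + N%:Z + M%:Z with
  | Posz n => \sum_(i < n.+1) f (i%:Z - N%:Z) * g (m - (i%:Z - N%:Z))
  | Negz _ => 0
  end.

Lemma conv_sucl f g N M m : vanish f N -> conv f g N.+1 M m = conv f g N M m.
Proof.
move=> vf; rewrite /conv.
case E2: (m + N%:Z + M%:Z) => [n|n]; case E1: (m + (N.+1)%:Z + M%:Z) => [n'|n'] //.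
- have -> : n' = n.+1 by lia.
  rewrite big_ord_recl /= vf ?mul0r ?add0r; last by lia.
  apply: eq_bigr => i _; congr (f _ * g _); rewrite /bump /=; lia.
- lia.
- have -> : n' = 0%N by lia.
  by rewrite big_ord_recl big_ord0 /= vf ?mul0r ?addr0 //; lia.
Qed.

Lemma conv_sucr f g N M m : vanish g M -> conv f g N M.+1 m = conv f g N M m.
Proof.
move=> vg; rewrite /conv.
case E2: (m + N%:Z + M%:Z) => [n|n]; case E1: (m + N%:Z + (M.+1)%:Z) => [n'|n'] //.
- have -> : n' = n.+1 by lia.
  rewrite big_ord_recr /= (vg (m - _)) ?mulr0 ?addr0; last by lia.
  by apply: eq_bigr => i _.
- lia.
- have -> : n' = 0%N by lia.
  by rewrite big_ord_recl big_ord0 /= vg ?mulr0 ?addr0 //; lia.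
Qed.


Lemma conv_monoP f g N M a b m : vanish f N -> vanish g M ->
  conv f g (N + a) (M + b) m = conv f g N M m.
Proof.
move=> vf vg.
have -> : conv f g (N + a) (M + b) m = conv f g N (M + b) m.
  elim: a => [|a IH]; first by rewrite addn0.
  by rewrite addnS conv_sucl; [exact: IH | exact: vanishW (leq_addr a N) vf].
elim: b => [|b IH]; first by rewrite addn0.
by rewrite addnS conv_sucr; [exact: IH | exact: vanishW (leq_addr b M) vg].
Qed.

Lemma conv_indep f g N M N' M' m : vanish f N -> vanish g M ->
  vanish f N' -> vanish g M' -> conv f g N M m = conv f g N' M' m.
Proof.
move=> vf vg vf' vg'.
rewrite -(conv_monoP (maxn N N' - N) (maxn M M' - M) m vf vg).
rewrite -(conv_monoP (maxn N N' - N') (maxn M M' - M') m vf' vg').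
by rewrite !subnKC // ?leq_maxl ?leq_maxr.
Qed.

Lemma conv_vanish f g N M : vanish (conv f g N M) (N + M).
Proof. move=> m hm; rewrite /conv; case E: (m + _ + _) => [n|n] //; lia. Qed.

(* Cauchy product identities via polynomials *)
Lemma cauchy_comm (a b : nat -> R) n :
  \sum_(i < n.+1) a i * b (n - i)%N = \sum_(i < n.+1) b i * a (n - i)%N.
Proof.
have E c d : (\poly_(i < n.+1) c i * \poly_(i < n.+1) d i : {poly R})`_n = \sum_(i < n.+1) c i * d (n - i)%N.
  rewrite coefM; apply: eq_bigr => i _; rewrite !coef_poly ltn_ord.
  by rewrite ifT //; lia.
have := E a b; have := E b a.
by move=> <- <-; rewrite mulrC.
Qed.

Lemma cauchy_assoc (a b c : nat -> R) n :
  \sum_(i < n.+1) (\sum_(j < i.+1) a j * b (i - j)%N) * c (n - i)%N =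
  \sum_(j < n.+1) a j * \sum_(k < (n - j).+1) b k * c (n - j - k)%N.
Proof.
pose P (c : nat -> R) := \poly_(i < n.+1) c i.
have C e i : (i <= n)%N -> (P e)`_i = e i by move=> h; rewrite coef_poly ltnS h.
have E1 : ((P a * P b) * P c)`_n = \sum_(i < n.+1) (\sum_(j < i.+1) a j * b (i - j)%N) * c (n - i)%N.
  rewrite coefM; apply: eq_bigr => i _; have hi := ltn_ord i.
  rewrite coefM (C c) ?leq_subr //; congr (_ * _).
  by apply: eq_bigr => j _; have hj := ltn_ord j; rewrite !C //; lia.
have E2 : (P a * (P b * P c))`_n = \sum_(j < n.+1) a j * \sum_(k < (n - j).+1) b k * c (n - j - k)%N.
  rewrite coefM; apply: eq_bigr => j _; have hj := ltn_ord j.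
  rewrite coefM (C a); last by lia.
  congr (_ * _).
  by apply: eq_bigr => k _; have hk := ltn_ord k; rewrite !C //; lia.
by rewrite -E1 -E2 mulrA.
Qed.

Definition L0 : L := @mkL R (fun _ => 0) (ex_intro _ 0%N (fun _ _ => erefl)).

Lemma Ladd_subproof (x y : L) :
  exists N : nat, forall m : int, m < - (N%:Z) -> lf x m + lf y m = 0.
Proof.
exists (maxn (bnd x) (bnd y)) => m hm.
by rewrite !bndP ?addr0 //; lia.
Qed.
Definition Ladd (x y : L) : L := mkL (Ladd_subproof x y).

Lemma Lopp_subproof (x : L) :
  exists N : nat, forall m : int, m < - (N%:Z) -> - lf x m = 0.
Proof. by exists (bnd x) => m hm; rewrite bndP ?oppr0. Qed.
Definition Lopp (x : L) : L := mkL (Lopp_subproof x).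

Lemma LaddA : associative Ladd.
Proof. by move=> x y z; apply: L_ext => m /=; rewrite addrA. Qed.
Lemma LaddC : commutative Ladd.
Proof. by move=> x y; apply: L_ext => m /=; rewrite addrC. Qed.
Lemma Ladd0 : left_id L0 Ladd.
Proof. by move=> x; apply: L_ext => m /=; rewrite add0r. Qed.
Lemma LaddN : left_inverse L0 Lopp Ladd.
Proof. by move=> x; apply: L_ext => m /=; rewrite addNr. Qed.

HB.instance Definition _ := GRing.isZmodule.Build L LaddA LaddC Ladd0 LaddN.

Lemma lfD (x y : L) m : lf (x + y) m = lf x m + lf y m. Proof. by []. Qed.
Lemma lfN (x : L) m : lf (- x) m = - lf x m. Proof. by []. Qed.
Lemma lfB (x y : L) m : lf (x - y) m = lf x m - lf y m. Proof. by []. Qed.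
Lemma lf0 m : lf (0 : L) m = 0. Proof. by []. Qed.

Lemma vbnd (x : L) : vanish (lf x) (bnd x).
Proof. by move=> m; apply: bndP. Qed.

Lemma Lmul_subproof (x y : L) :
  exists N : nat, forall m : int, m < - (N%:Z) ->
     conv (lf x) (lf y) (bnd x) (bnd y) m = 0.
Proof. by exists (bnd x + bnd y)%N; apply: conv_vanish. Qed.
Definition Lmul (x y : L) : L := mkL (Lmul_subproof x y).

Lemma LmulE (x y : L) N M : vanish (lf x) N -> vanish (lf y) M ->
  forall m, lf (Lmul x y) m = conv (lf x) (lf y) N M m.
Proof. by move=> vx vy m; apply: conv_indep => //; apply: vbnd. Qed.

Definition L1f (m : int) : R := if m == 0 then 1 else 0.
Lemma L1_subproof : exists N : nat, forall m : int, m < - (N%:Z) -> L1f m = 0.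
Proof. by exists 0%N => m hm; rewrite /L1f ifF //; apply/eqP; lia. Qed.
Definition L1 : L := mkL L1_subproof.

Lemma conv_comm f g N M m : conv f g N M m = conv g f M N m.
Proof.
rewrite /conv; have -> : m + M%:Z + N%:Z = m + N%:Z + M%:Z by ring.
case E: (m + N%:Z + M%:Z) => [n|n] //.
transitivity (\sum_(i < n.+1) (fun i => f (i%:Z - N%:Z)) i
                 * (fun k => g (k%:Z - M%:Z)) (n - i)%N).
  by apply: eq_bigr => i _; congr (_ * g _); have := ltn_ord i; lia.
rewrite (cauchy_comm (fun i => f (i%:Z - N%:Z)) (fun k => g (k%:Z - M%:Z))).
apply: eq_bigr => i _; congr (_ * f _); have := ltn_ord i; lia.
Qed.

Lemma LmulC : commutative Lmul.
Proof. by move=> x y; apply: L_ext => m /=; rewrite conv_comm. Qed.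

Lemma LmulA : associative Lmul.
Proof.
move=> x y z; apply: L_ext => m.
set N1 := bnd x; set N2 := bnd y; set N3 := bnd z.
have v1 := (@vbnd x); have v2 := (@vbnd y); have v3 := (@vbnd z).
rewrite (@LmulE x (Lmul y z) N1 (N2 + N3)) //; last first.
  by move=> k hk; rewrite (LmulE v2 v3); apply: conv_vanish.
rewrite (@LmulE (Lmul x y) z (N1 + N2) N3) //; last first.
  by move=> k hk; rewrite (LmulE v1 v2); apply: conv_vanish.
rewrite /conv.
have -> : m + N1%:Z + (N2 + N3)%N%:Z = m + (N1 + N2)%N%:Z + N3%:Z by rewrite !PoszD; ring.
case E: (m + (N1 + N2)%N%:Z + N3%:Z) => [n|n] //.
pose a j := lf x (j%:Z - N1%:Z); pose b k := lf y (k%:Z - N2%:Z);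
pose c l := lf z (l%:Z - N3%:Z).
symmetry.
transitivity (\sum_(i < n.+1) (\sum_(j < i.+1) a j * b (i - j)%N) * c (n - i)%N).
  apply: eq_bigr => i _; rewrite (LmulE v1 v2) /conv.
  have -> : i%:Z - (N1 + N2)%N%:Z + N1%:Z + N2%:Z = i%:Z by rewrite PoszD; ring.
  congr (_ * _); last by rewrite /c; congr (lf z _); have := ltn_ord i; lia.
  apply: eq_bigr => j _; rewrite /a /b; congr (_ * lf y _); have := ltn_ord j; lia.
rewrite cauchy_assoc; apply: eq_bigr => j _; congr (_ * _).
rewrite (LmulE v2 v3) /conv.
have -> : m - (j%:Z - N1%:Z) + N2%:Z + N3%:Z = (n - j)%N%:Z.
  by have := ltn_ord j; rewrite PoszD in E; lia.
apply: eq_bigr => k _; rewrite /b /c; congr (_ * lf z _).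
have := ltn_ord k; have := ltn_ord j; rewrite PoszD in E; lia.
Qed.

Lemma Lmul1 : left_id L1 Lmul.
Proof.
move=> x; apply: L_ext => m.
have v1 : vanish (lf L1) 0 by move=> k hk; rewrite /= /L1f ifF //; apply/eqP; lia.
rewrite (LmulE v1 ((@vbnd x))) /conv.
case E: (m + 0%:Z + (bnd x)%:Z) => [n|n].
  rewrite big_ord_recl /= /L1f eqxx mul1r subr0 big1 ?addr0 // => i _.
  by rewrite (_ : (_ == _) = false) ?mul0r //; apply/eqP; rewrite /bump /=; lia.
by rewrite bndP //; lia.
Qed.

Lemma LmulDl : left_distributive Lmul Ladd.
Proof.
move=> x y z; apply: L_ext => m.
have vxy : vanish (lf (Ladd x y)) (maxn (bnd x) (bnd y)).
  by move=> k hk; rewrite /= !bndP ?addr0 //; lia.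
rewrite (LmulE vxy ((@vbnd z))).
have -> : lf (Ladd (Lmul x z) (Lmul y z)) m = lf (Lmul x z) m + lf (Lmul y z) m by [].
rewrite (LmulE (vanishW (leq_maxl (bnd x) (bnd y)) (@vbnd x)) ((@vbnd z))).
rewrite (LmulE (@vanishW (lf y) (bnd y) (maxn (bnd x) (bnd y)) (leq_maxr (bnd x) (bnd y)) (@vbnd y)) ((@vbnd z))) /conv.
case: (_ + _ + _) => [n|n]; last by rewrite addr0.
by rewrite -big_split; apply: eq_bigr => i _; rewrite mulrDl.
Qed.

Lemma L1_neq0 : L1 != 0.
Proof.
apply/eqP => /(congr1 (fun x => lf x 0)); rewrite /= /L1f eqxx => /eqP.
by rewrite oner_eq0.
Qed.

HB.instance Definition _ := GRing.Zmodule_isComNzRing.Build L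
  LmulA LmulC Lmul1 LmulDl L1_neq0.

Lemma lfM (x y : L) N M : vanish (lf x) N -> vanish (lf y) M ->
  forall m, lf (x * y) m = conv (lf x) (lf y) N M m.
Proof. exact: LmulE. Qed.

End LRing.
Section Poly_aux.
Lemma map_polyMXaddC (A B : nzRingType) (f : {additive A -> B}) (q : {poly A}) c :
  map_poly f (q * 'X + c%:P) = map_poly f q * 'X + (f c)%:P.
Proof.
apply/polyP => i; rewrite coef_map !coefD !coefMX !coefC coef_map raddfD.
by case: i => [|i] //=; rewrite ?raddf0 // coefMX /= ?add0r ?addr0.
Qed.
Lemma deriv_map_add (A B : nzRingType) (f : {additive A -> B}) (q : {poly A}) :
  (map_poly f q)^`() = map_poly f q^`().
Proof. by apply/polyP => i; rewrite !(coef_map, coef_deriv) raddfMn. Qed.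
End Poly_aux.

Section LDer.
Variable R : comNzRingType.
Local Notation L := (LS R).
Variable d : {additive R -> R}.
Hypothesis dM : forall a b, d (a * b) = d a * b + a * d b.

Lemma Ld_subproof (x : L) :
  exists N : nat, forall m : int, m < - (N%:Z) -> d (lf x m) = 0.
Proof. by exists (bnd x) => m hm; rewrite bndP ?raddf0. Qed.
Definition Ldf (x : L) : L := mkL (Ld_subproof x).

Lemma Ldf_is_additive : zmod_morphism Ldf.
Proof. by move=> x y; apply: L_ext => m /=; rewrite raddfB. Qed.

Definition Ld : {additive L -> L} :=
  HB.pack Ldf (GRing.isZmodMorphism.Build _ _ Ldf Ldf_is_additive).

Lemma lfLd x m : lf (Ld x) m = d (lf x m). Proof. by []. Qed.

Lemma LdM x y : Ld (x * y) = Ld x * y + x * Ld y.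
Proof.
apply: L_ext => m; rewrite lfD lfLd.
have vx := @vbnd _ x; have vy := @vbnd _ y.
have vdx : vanish (lf (Ld x)) (bnd x) by move=> k hk; rewrite lfLd vx ?raddf0.
have vdy : vanish (lf (Ld y)) (bnd y) by move=> k hk; rewrite lfLd vy ?raddf0.
rewrite (lfM vx vy) (lfM vdx vy) (lfM vx vdy) /conv.
case: (_ + _ + _) => [n|n]; last by rewrite raddf0 addr0.
by rewrite raddf_sum -big_split; apply: eq_bigr => i _; rewrite dM.
Qed.

Lemma Ld_horner (p : {poly L}) x :
  Ld p.[x] = (map_poly Ld p).[x] + p^`().[x] * Ld x.
Proof.
elim/poly_ind: p => [|p c IH].
  by rewrite horner0 raddf0 map_poly0 deriv0 !horner0 mul0r addr0.
rewrite hornerMXaddC raddfD LdM IH map_polyMXaddC derivMXaddC.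
rewrite hornerMXaddC hornerD hornerMX; ring.
Qed.

Variable K : nzRingType.
Variable e0 : {additive K -> L}.
Hypothesis de0 : forall a, Ld (e0 a) = 0.
Variable y : L.

Definition ev1f (Q : {poly K}) : L := (map_poly e0 Q).[y].
Lemma ev1f_is_additive : zmod_morphism ev1f.
Proof. by move=> p q; rewrite /ev1f raddfB hornerD hornerN. Qed.
Definition ev1 : {additive {poly K} -> L} :=
  HB.pack ev1f (GRing.isZmodMorphism.Build _ _ ev1f ev1f_is_additive).

Lemma Ld_ev1 Q : Ld (ev1 Q) = ev1 Q^`() * Ld y.
Proof.
have -> : ev1 Q = (map_poly e0 Q).[y] by [].
rewrite Ld_horner.
have -> : map_poly Ld (map_poly e0 Q) = 0.
  by apply/polyP => i; rewrite !coef_map de0 coef0.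
by rewrite horner0 add0r deriv_map_add.
Qed.

Lemma Ld_ev2 (P : {poly {poly K}}) x :
  Ld (map_poly ev1 P).[x] =
  (map_poly ev1 P^`()).[x] * Ld x + (map_poly ev1 (map_poly (@deriv K) P)).[x] * Ld y.
Proof.
rewrite Ld_horner addrC deriv_map_add; congr (_ + _).
have -> : map_poly Ld (map_poly ev1 P) =
    map_poly ev1 (map_poly (@deriv K) P) * (Ld y)%:P.
  by apply/polyP => i; rewrite coefMC !coef_map; exact: Ld_ev1.
by rewrite hornerM hornerC.
Qed.

End LDer.
Section Ser.
Variable F : realType.
Local Notation R := (Rphi F).
Local Notation L := (LS R).

Lemma lcoefP (s : lser F) m n : m + (lsh s)%:Z = n%:Z -> lcoef s m = lco s n.
Proof. by rewrite /lcoef => ->. Qed.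

Lemma lcoefN (s : lser F) m : m + (lsh s)%:Z < 0 -> lcoef s m = 0.
Proof. by move=> h; rewrite /lcoef; case E: (m + _) => [n|n] //; lia. Qed.

Lemma vanish_lcoef (s : lser F) : vanish (lcoef s) (lsh s).
Proof. by move=> m hm; apply: lcoefN; lia. Qed.

Definition toL (s : lser F) : L := @mkL R (lcoef s) (ex_intro _ (lsh s) (@vanish_lcoef s)).

Lemma lfT s m : lf (toL s) m = lcoef s m. Proof. by []. Qed.

Lemma lcoef_raise (s : lser F) k N m : N = (lsh s + k)%N ->
  match m + N%:Z with
  | Posz n => if (k <= n)%N then lco s (n - k) else 0
  | Negz _ => 0 end = lcoef s m.
Proof.
move=> ->; case E: (m + _) => [n|n]; [case: leqP => h|].
- by symmetry; apply: lcoefP; lia.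
- by symmetry; apply: lcoefN; lia.
- by symmetry; apply: lcoefN; lia.
Qed.

Lemma lcoef_add (s t : lser F) m : lcoef (ladd s t) m = lcoef s m + lcoef t m.
Proof.
set N := maxn (lsh s) (lsh t).
rewrite -(@lcoef_raise s (N - lsh s) N m); last by rewrite subnKC // leq_maxl.
rewrite -(@lcoef_raise t (N - lsh t) N m); last by rewrite subnKC // leq_maxr.
rewrite /lcoef /=; case: (m + _) => [n|n] //; by rewrite addr0.
Qed.

Lemma lcoef_opp (s : lser F) m : lcoef (lopp s) m = - lcoef s m.
Proof. by rewrite /lcoef /=; case: (m + _) => [n|n] //; rewrite oppr0. Qed.

Lemma lcoef_zero m : lcoef (lzero F) m = 0.
Proof. by rewrite /lcoef; case: (m + _). Qed.

Lemma toL_add s t : toL (ladd s t) = toL s + toL t.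
Proof. by apply: L_ext => m; rewrite lfD !lfT lcoef_add. Qed.

Lemma toL_opp s : toL (lopp s) = - toL s.
Proof. by apply: L_ext => m; rewrite lfN !lfT lcoef_opp. Qed.

Lemma toL_sub s t : toL (lsub s t) = toL s - toL t.
Proof. by rewrite /lsub toL_add toL_opp. Qed.

Lemma toL_zero : toL (lzero F) = 0.
Proof. by apply: L_ext => m; rewrite lfT lcoef_zero. Qed.

Lemma toL_mul s t : toL (lmul s t) = toL s * toL t.
Proof.
apply: L_ext => m; rewrite (@lfM _ (toL s) (toL t) (lsh s) (lsh t) (@vanish_lcoef s) (@vanish_lcoef t)) lfT /conv.
case E: (m + (lsh s)%:Z + (lsh t)%:Z) => [n|n].
  rewrite (@lcoefP _ m n); last by rewrite /= PoszD addrA.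
  apply: eq_bigr => i _; have hi := ltn_ord i; rewrite !lfT.
  rewrite (@lcoefP s _ i); last by lia.
  rewrite (@lcoefP t _ (n - i)); last by lia.
  reflexivity.
by rewrite lcoefN //= PoszD; lia.
Qed.

Lemma lcoef_lD (s : lser F) m : lcoef (lD s) m = (m + 1)%:~R * lcoef s (m + 1).
Proof.
case E: (m + 1 + (lsh s)%:Z) => [n|n].
  rewrite (@lcoefP (lD s) m n); last by rewrite /=; lia.
  rewrite (@lcoefP s (m + 1) n); last exact: E.
  change (lco (lD s) n) with (((n%:Z - (lsh s)%:Z))%:~R * lco s n).
  have -> : (n%:Z - (lsh s)%:Z) = m + 1 by lia.
  reflexivity.
rewrite lcoefN; last by rewrite /=; lia.
rewrite lcoefN ?mulr0 //; lia.
Qed.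

Lemma toL_lhorner (c : seq (lser F)) x :
  toL (lhorner c x) = (Poly (map toL c)).[toL x].
Proof.
elim: c => [|a c IH] /=; first by rewrite horner0 toL_zero.
by rewrite horner_cons -IH toL_add toL_mul addrC.
Qed.

Definition e0f (q : {poly F}) : L := toL (lpoly q).
Lemma lcoef_lin (s1 s2 s3 : lser F) m N : lsh s1 = N -> lsh s2 = N -> lsh s3 = N ->
  (forall n, lco s1 n = lco s2 n - lco s3 n) -> lcoef s1 m = lcoef s2 m - lcoef s3 m.
Proof.
case: s1 s2 s3 => [N1 a1] [N2 a2] [N3 a3] /= -> -> -> h.
by rewrite /lcoef /=; case: (m + _) => [n|n]; rewrite ?subr0 ?h.
Qed.

Lemma e0f_is_additive : zmod_morphism e0f.
Proof.
move=> p q; apply: L_ext => m.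
change (lcoef (lpoly (p - q)) m = lcoef (lpoly p) m - lcoef (lpoly q) m).
apply: (@lcoef_lin (lpoly (p - q)) (lpoly p) (lpoly q) m 0 (erefl 0%N) (erefl 0%N) (erefl 0%N)) => n.
change (((p - q)`_n)%:A = (p`_n)%:A - (q`_n)%:A :> R).
by rewrite coefB scalerBl.
Qed.
Definition e0 : {additive {poly F} -> L} :=
  HB.pack e0f (GRing.isZmodMorphism.Build _ _ e0f e0f_is_additive).

Lemma toL_gev (G : gpoly F) :
  toL (gev G) = toL (lampowN F (gsh G)) *
     (map_poly (ev1 e0 (toL (lD (phi F)))) (gpol G)).[toL (phi F)].
Proof.
rewrite /gev toL_mul toL_lhorner map_polyE -map_comp.
congr (_ * (Poly _).[_]); apply: eq_map => Q.
transitivity ((map_poly e0 Q).[toL (lD (phi F))]); last by [].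
by rewrite map_polyE /= toL_lhorner -map_comp.
Qed.

End Ser.
Section PDV.
Variable F : realType.
Local Notation R := (Rphi F).

Lemma pdvEw k (r : R) (S : {fset cmonom nat}) : msupp r `<=` S ->
  pdv k r = \sum_(m <- S) << r@_m * (m k)%:R *g divcm m (ucm k) >>.
Proof.
move=> h; rewrite /pdv (big_fset_incl _ h) // => m _ /mcoeff_outdom ->.
by rewrite mul0r monalgU0.
Qed.

Local Opaque pdv.

Lemma pdv_is_additive k : zmod_morphism (@pdv F k).
Proof.
move=> r s; set S := msupp r `|` msupp s `|` msupp (r - s).
have h1 : msupp r `<=` S by rewrite /S -fsetUA fsubsetUl.
have h2 : msupp s `<=` S by rewrite /S fsetUAC fsubsetUr.
have h3 : msupp (r - s) `<=` S by rewrite /S fsubsetUr.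
rewrite (pdvEw _ h1) (pdvEw _ h2) (pdvEw _ h3) -sumrB.
by apply: eq_bigr => m _; rewrite mcoeffB mulrBl monalgUB.
Qed.

HB.instance Definition _ k := GRing.isZmodMorphism.Build R R (@pdv F k)
  (pdv_is_additive k).

Lemma pdvU k c (m : cmonom nat) :
  pdv k << c *g m >> = << c * (m k)%:R *g divcm m (ucm k) >> :> R.
Proof. by rewrite (pdvEw _ msuppU_le) big_seq_fset1 mcoeffUU. Qed.

Lemma UU (c1 c2 : F) (m1 m2 : cmonom nat) :
  << c1 *g m1 >> * << c2 *g m2 >> = << c1 * c2 *g mmul m1 m2 >> :> R.
Proof. exact: fgmulUU. Qed.

Lemma UE (c c' : F) (m m' : cmonom nat) :
  c = c' -> m = m' -> << c *g m >> = << c' *g m' >> :> R.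
Proof. by move=> -> ->. Qed.

Lemma addE (a a' b b' : R) : a = a' -> b = b' -> a + b = a' + b'.
Proof. by move=> -> ->. Qed.

Lemma pdvUM k c1 c2 (m1 m2 : cmonom nat) :
  pdv k (<< c1 *g m1 >> * << c2 *g m2 >> : R) =
  pdv k << c1 *g m1 >> * << c2 *g m2 >> + << c1 *g m1 >> * pdv k << c2 *g m2 >>.
Proof.
rewrite UU.
transitivity (<< c1 * c2 * ((mmul m1 m2 : cmonom nat) k)%:R
                 *g divcm (mmul m1 m2) (ucm k) >> : R); first exact: pdvU.
transitivity (<< c1 * (m1 k)%:R * c2 *g mmul (divcm m1 (ucm k)) m2 >> +
              << c1 * (c2 * (m2 k)%:R) *g mmul m1 (divcm m2 (ucm k)) >> : R); last first.
  congr (_ + _).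
    transitivity (<< c1 * (m1 k)%:R *g divcm m1 (ucm k) >> * << c2 *g m2 >> : R).
      by symmetry; apply: UU.
    by congr (_ * _); symmetry; apply: pdvU.
  transitivity (<< c1 *g m1 >> * << c2 * (m2 k)%:R *g divcm m2 (ucm k) >> : R).
    by symmetry; apply: UU.
  by congr (_ * _); symmetry; apply: pdvU.
rewrite cmM natrD mulrDr monalgUD; apply: addE.
  have [->|nz] := eqVneq (m1 k) 0%N; first by rewrite !mulr0 ?mul0r !monalgU0.
  apply: UE; first by rewrite mulrAC.
  apply/eqP/cmP => i; rewrite !(divcmE, cmM, ucmE).
  case: eqP => [<-|_]; last by rewrite !subn0.
  by move: nz; lia.
have [->|nz] := eqVneq (m2 k) 0%N; first by rewrite !mulr0 ?mul0r !monalgU0.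
apply: UE; first by rewrite mulrA.
apply/eqP/cmP => i; rewrite !(divcmE, cmM, ucmE).
case: eqP => [<-|_]; last by rewrite !subn0.
by move: nz; lia.
Qed.

Lemma pdvM k (r s : R) : pdv k (r * s) = pdv k r * s + r * pdv k s.
Proof.
have A : pdv k (r * s) = \sum_(m1 <- msupp r) \sum_(m2 <- msupp s)
    pdv k (<< r@_m1 *g m1 >> * << s@_m2 *g m2 >>).
  rewrite {1}(monalgE r) mulr_suml raddf_sum /=; apply: eq_bigr => m1 _.
  by rewrite {1}(monalgE s) mulr_sumr raddf_sum /=.
have B : pdv k r * s = \sum_(m1 <- msupp r) \sum_(m2 <- msupp s)
    pdv k << r@_m1 *g m1 >> * << s@_m2 *g m2 >>.
  rewrite {1}(monalgE r) raddf_sum /= mulr_suml; apply: eq_bigr => m1 _.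
  rewrite {1}(monalgE s) mulr_sumr; reflexivity.
have C : r * pdv k s = \sum_(m1 <- msupp r) \sum_(m2 <- msupp s)
    << r@_m1 *g m1 >> * pdv k << s@_m2 *g m2 >>.
  rewrite {1}(monalgE r) mulr_suml; apply: eq_bigr => m1 _.
  rewrite {1}(monalgE s) raddf_sum /= mulr_sumr; reflexivity.
rewrite A B C -big_split; apply: eq_bigr => m1 _.
rewrite -big_split; apply: eq_bigr => m2 _; exact: pdvUM.
Qed.

Lemma vars_sub (r : R) (m : cmonom nat) : m \in msupp r -> finsupp m `<=` vars r.
Proof. by move=> h; rewrite /vars (bigfcup_sup _ h). Qed.

Lemma pdv_out k (r : R) : k \notin vars r -> pdv k r = 0.
Proof.
move=> hk; rewrite (pdvEw _ (fsubset_refl _)) big_seq big1 // => m hm.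
have -> : m k = 0%N.
  apply/eqP; rewrite cmE_eq0; apply: contra hk => h.
  exact: (fsubsetP (vars_sub hm)).
by rewrite mulr0 monalgU0.
Qed.

Lemma add_eq (f g : R -> R) : zmod_morphism f -> zmod_morphism g ->
  (forall c m, f << c *g m >> = g << c *g m >>) -> forall r, f r = g r.
Proof.
move=> hf hg h r.
have F0 : f 0 = 0 by have := hf 0 0; rewrite subrr => E; rewrite E subrr.
have G0 : g 0 = 0 by have := hg 0 0; rewrite subrr => E; rewrite E subrr.
have FN y : f (- y) = - f y.
  by have E := hf 0 y; rewrite sub0r F0 sub0r in E; exact: E.
have GN y : g (- y) = - g y.
  by have E := hg 0 y; rewrite sub0r G0 sub0r in E; exact: E.
have FD x y : f (x + y) = f x + f y.
  by have E := hf x (- y); rewrite opprK FN opprK in E; exact: E.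
have GD x y : g (x + y) = g x + g y.
  by have E := hg x (- y); rewrite opprK GN opprK in E; exact: E.
have gen (l : seq (cmonom nat)) :
    f (\sum_(m <- l) << r@_m *g m >>) = g (\sum_(m <- l) << r@_m *g m >>).
  elim: l => [|m l IH]; first by rewrite big_nil F0 G0.
  by rewrite big_cons FD GD IH h.
by rewrite (monalgE r); apply: gen.
Qed.

Lemma pdv2U j k c m : pdv j (pdv k << c *g m >>) = << c * (m k)%:R * ((divcm m (ucm k)) j)%:R
     *g divcm (divcm m (ucm k)) (ucm j) >> :> R.
Proof. by rewrite (pdvU k c m) pdvU. Qed.

Lemma pdv_sym j k (r : R) : pdv j (pdv k r) = pdv k (pdv j r).
Proof.
apply: (@add_eq (fun x => pdv j (pdv k x)) (fun x => pdv k (pdv j x))).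
- by move=> x y /=; rewrite (pdv_is_additive k) (pdv_is_additive j).
- by move=> x y /=; rewrite (pdv_is_additive j) (pdv_is_additive k).
move=> c m /=.
rewrite !pdv2U; apply: UE.
  rewrite !divcmE !ucmE -!mulrA -!natrM; congr (_ * _%:R).
  case: (eqVneq k j) => [->|ne] //=.
  by rewrite !subn0 mulnC.
by apply/eqP/cmP => i; rewrite !divcmE !ucmE subnAC.
Qed.

Lemma pdv_var k n : pdv k (phivar F n) = (k == n)%:R.
Proof.
rewrite /phivar pdvU ucmE mul1r eq_sym.
case: (eqVneq k n) => [->|ne]; last by rewrite monalgU0.
have -> : divcm (ucm n) (ucm n) = mone.
  by apply/eqP/cmP => i; rewrite divcmE cm1 subnn.
by rewrite mpolyC1E.
Qed.

Lemma algU (c : F) : c%:A = << c *g mone >> :> R.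
Proof.
by rewrite -mul_malgC mulr1.
Qed.

Lemma pdv_alg k (c : F) : pdv k (c%:A : R) = 0.
Proof. by rewrite algU pdvU cm1 mulr0 monalgU0. Qed.

Lemma pderEw (f : lser F) (r : R) (W : {fset nat}) : vars r `<=` W ->
  pder f r = \sum_(k <- W) lcoef f (k.+1)%:Z * pdv k r.
Proof.
move=> h; rewrite /pder (big_fset_incl _ h) // => k _ hk.
by rewrite pdv_out ?mulr0.
Qed.

Lemma pder_is_additive (f : lser F) : zmod_morphism (pder f).
Proof.
move=> r s; set W := vars r `|` vars s `|` vars (r - s).
have h1 : vars r `<=` W by rewrite /W -fsetUA fsubsetUl.
have h2 : vars s `<=` W by rewrite /W fsetUAC fsubsetUr.
have h3 : vars (r - s) `<=` W by rewrite /W fsubsetUr.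
rewrite (pderEw _ h1) (pderEw _ h2) (pderEw _ h3) -sumrB.
by apply: eq_bigr => k _; rewrite raddfB mulrBr.
Qed.

HB.instance Definition _ f := GRing.isZmodMorphism.Build R R (@pder F f)
  (pder_is_additive f).

Lemma pderM (f : lser F) (r s : R) : pder f (r * s) = pder f r * s + r * pder f s.
Proof.
set W := vars r `|` vars s `|` vars (r * s).
have h1 : vars r `<=` W by rewrite /W -fsetUA fsubsetUl.
have h2 : vars s `<=` W by rewrite /W fsetUAC fsubsetUr.
have h3 : vars (r * s) `<=` W by rewrite /W fsubsetUr.
rewrite (pderEw _ h1) (pderEw _ h2) (pderEw _ h3) mulr_suml mulr_sumr -big_split.
apply: eq_bigr => k _; rewrite pdvM mulrDr; apply: addE; first by rewrite mulrA.
by rewrite mulrCA.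
Qed.

Lemma vars_var n : vars (phivar F n) `<=` [fset n].
Proof.
apply/bigfcupsP => m hm _; move: hm; rewrite /phivar msuppU1 inE => /eqP ->.
by rewrite mdomU.
Qed.

Lemma pder_var (f : lser F) n : pder f (phivar F n) = lcoef f (n.+1)%:Z.
Proof. by rewrite (pderEw _ (vars_var n)) big_seq_fset1 pdv_var eqxx mulr1. Qed.

Lemma pder_alg (f : lser F) (c : F) : pder f (c%:A : R) = 0.
Proof. by rewrite /pder big1 // => k _; rewrite pdv_alg mulr0. Qed.

Local Opaque pder vars lcoef.

Lemma aux4 (A B S C : R) : A - B = C -> A + S - (B + S) = C.
Proof. by move=> <-; rewrite opprD addrACA subrr addr0. Qed.

Lemma pder_comm (g h b : lser F) :
  (forall k : nat, lcoef b (k.+1)%:Z =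
     pder g (lcoef h (k.+1)%:Z) - pder h (lcoef g (k.+1)%:Z)) ->
  forall r : R, pder g (pder h r) - pder h (pder g r) = pder b r.
Proof.
move=> hb r.
set V := vars r.
set W := V `|` vars (pder h r) `|` vars (pder g r) `|`
  \bigcup_(k <- V) (vars (lcoef h (k.+1)%:Z) `|` vars (lcoef g (k.+1)%:Z)).
have hV : V `<=` W.
  by apply/fsubsetP => x hx; rewrite /W !in_fsetU; apply/orP; left; apply/orP; left; apply/orP; left.
have hA : vars (pder h r) `<=` W.
  by apply/fsubsetP => x hx; rewrite /W !in_fsetU; apply/orP; left; apply/orP; left; apply/orP; right.
have hB : vars (pder g r) `<=` W.
  by apply/fsubsetP => x hx; rewrite /W !in_fsetU; apply/orP; left; apply/orP; right.
have hk k : k \in V -> vars (lcoef h (k.+1)%:Z) `|` vars (lcoef g (k.+1)%:Z) `<=` W.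
  move=> kV; apply: fsubset_trans (bigfcup_sup (fun k => vars (lcoef h (k.+1)%:Z) `|` vars (lcoef g (k.+1)%:Z)) kV isT) _.
  by apply/fsubsetP => x hx; rewrite /W !in_fsetU; apply/orP; right.
have hkh k : k \in V -> vars (lcoef h (k.+1)%:Z) `<=` W.
  by move=> kV; apply: fsubset_trans (hk k kV); rewrite fsubsetUl.
have hkg k : k \in V -> vars (lcoef g (k.+1)%:Z) `<=` W.
  by move=> kV; apply: fsubset_trans (hk k kV); rewrite fsubsetUr.
have E (u v : lser F) (hu : forall k, k \in V -> vars (lcoef v (k.+1)%:Z) `<=` W)
       (hvr : vars (pder v r) `<=` W) :
    pder u (pder v r) =
      \sum_(k <- W) pder u (lcoef v (k.+1)%:Z) * pdv k r +
      \sum_(j <- W) \sum_(k <- W)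
          lcoef u (j.+1)%:Z * lcoef v (k.+1)%:Z * pdv j (pdv k r).
  rewrite (pderEw _ hvr).
  transitivity (\sum_(j <- W) \sum_(k <- W) (lcoef u (j.+1)%:Z *
     (pdv j (lcoef v (k.+1)%:Z) * pdv k r) +
      lcoef u (j.+1)%:Z * lcoef v (k.+1)%:Z * pdv j (pdv k r))).
    apply: eq_bigr => j _; rewrite (pderEw _ hV) raddf_sum /= mulr_sumr.
    apply: eq_bigr => k _; rewrite pdvM mulrDr; apply: addE; [reflexivity | exact: mulrA].
  rewrite (eq_bigr _ (fun j _ => big_split _ _ _ _ _)) big_split /=; congr (_ + _).
  rewrite exchange_big; apply: eq_bigr => k _.
  have [kV|kV] := boolP (k \in V); last first.
    rewrite pdv_out // mulr0 big1 // => j _; by rewrite mulr0 mulr0.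
  rewrite (pderEw _ (hu k kV)) mulr_suml; apply: eq_bigr => j _; by rewrite mulrA.
rewrite (E g h hkh hA) (E h g hkg hB) (pderEw _ hV).
have EQ : \sum_(j <- W) \sum_(k <- W)
          lcoef h (j.+1)%:Z * lcoef g (k.+1)%:Z * pdv j (pdv k r) =
        \sum_(j <- W) \sum_(k <- W)
          lcoef g (j.+1)%:Z * lcoef h (k.+1)%:Z * pdv j (pdv k r).
  rewrite [X in X = _]exchange_big /=; apply: eq_bigr => j _; apply: eq_bigr => k _.
  rewrite pdv_sym (mulrC (lcoef h _)); reflexivity.
rewrite [X in _ - (_ + X) = _]EQ; apply: aux4.
rewrite -sumrB; apply: eq_bigr => k _.
rewrite hb mulrBl; reflexivity.
Qed.

End PDV.
Section Main.
Variable F : realType.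
Local Notation R := (Rphi F).
Local Notation L := (LS R).

Definition pderA (g : lser F) : {additive R -> R} :=
  HB.pack (pder g) (GRing.isZmodMorphism.Build _ _ (pder g) (pder_is_additive g)).

Lemma pderA_M g : forall a b : R, pderA g (a * b) = pderA g a * b + a * pderA g b.
Proof. exact: pderM. Qed.

Lemma pder0 (g : lser F) : pder g 0 = 0.
Proof. exact: (raddf0 (pderA g)). Qed.

Lemma pder1 (g : lser F) : pder g 1 = 0.
Proof. by have := pder_alg g 1; rewrite scale1r. Qed.

Lemma LaddE (a a' b b' : L) : a = a' -> b = b' -> a + b = a' + b'.
Proof. by move=> -> ->. Qed.
Lemma LsubE (a a' b b' : L) : a = a' -> b = b' -> a - b = a' - b'.
Proof. by move=> -> ->. Qed.
Lemma LmulE1 (a a' b : L) : a = a' -> a * b = a' * b.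
Proof. by move=> ->. Qed.

Lemma pder_mz (g : lser F) (z : int) (x : R) : pder g (z%:~R * x) = z%:~R * pder g x.
Proof. by rewrite !mulrzl; exact: (raddfMz (pderA g)). Qed.

Lemma Ld_e0 g a : Ld (pderA g) (e0 F a) = 0.
Proof.
apply: L_ext => m; change (pder g (lcoef (lpoly a) m) = 0).
rewrite /lcoef; case: (m + _) => [n|n]; last exact: pder0.
exact: pder_alg.
Qed.

Lemma Ld_pow g N : Ld (pderA g) (toL (lampowN F N)) = 0.
Proof.
apply: L_ext => m; change (pder g (lcoef (lampowN F N) m) = 0).
rewrite /lcoef; case: (m + _) => [n|n]; last exact: pder0.
change (pder g (if n == 0%N then 1 else 0) = 0).
by case: (n == 0%N); [exact: pder1 | exact: pder0].
Qed.

Lemma Ld_phi_pt g m : posord g -> pder g (lcoef (phi F) m) = lcoef g m.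
Proof.
move=> hg.
case E: (m + 1) => [n|n].
  rewrite (@lcoefP _ (phi F) m n); last by rewrite /=; lia.
  case: n E => [|[|k]] E.
  - change (pder g 1 = lcoef g m); rewrite pder1; symmetry; apply: hg; lia.
  - change (pder g 0 = lcoef g m); rewrite pder0; symmetry; apply: hg; lia.
  - change (pder g (phivar F k) = lcoef g m); rewrite pder_var.
    by have -> : m = (k.+1)%:Z by lia.
rewrite lcoefN; last by rewrite /=; lia.
rewrite pder0; symmetry; apply: hg; lia.
Qed.

Lemma Ld_phi g : posord g -> Ld (pderA g) (toL (phi F)) = toL g.
Proof. by move=> hg; apply: L_ext => m; exact: Ld_phi_pt. Qed.

Lemma Ld_dphi g : posord g -> Ld (pderA g) (toL (lD (phi F))) = toL (lD g).
Proof.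
move=> hg; apply: L_ext => m.
change (pder g (lcoef (lD (phi F)) m) = lcoef (lD g) m).
transitivity (pder g ((m + 1)%:~R * lcoef (phi F) (m + 1))).
  exact: (congr1 (pder g) (lcoef_lD (phi F) m)).
transitivity ((m + 1)%:~R * pder g (lcoef (phi F) (m + 1))).
  exact: pder_mz.
transitivity ((m + 1)%:~R * lcoef g (m + 1)).
  exact: (congr1 (fun x => (m + 1)%:~R * x) (Ld_phi_pt (m + 1) hg)).
symmetry; exact: lcoef_lD.
Qed.

Lemma Ld_gev_abs g (c : L) (P : {poly {poly {poly F}}}) (x y : L) :
  Ld (pderA g) c = 0 ->
  Ld (pderA g) (c * (map_poly (ev1 (e0 F) y) P).[x]) =
  (c * (map_poly (ev1 (e0 F) y) P^`()).[x]) * Ld (pderA g) x +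
  (c * (map_poly (ev1 (e0 F) y) (map_poly (@deriv _) P)).[x]) * Ld (pderA g) y.
Proof.
move=> hc; rewrite (LdM (pderA_M g)) hc mul0r add0r.
by rewrite (Ld_ev2 (pderA_M g) (Ld_e0 g)) mulrDr !mulrA.
Qed.

Lemma Ld_gev g (hg : posord g) (G : gpoly F) :
  Ld (pderA g) (toL (gev G)) =
  toL (gev (gda G)) * toL g + toL (gev (gdb G)) * toL (lD g).
Proof.
have A := Ld_gev_abs (gpol G) (toL (phi F)) (toL (lD (phi F))) (Ld_pow g (gsh G)).
transitivity (Ld (pderA g) (toL (lampowN F (gsh G)) *
   (map_poly (ev1 (e0 F) (toL (lD (phi F)))) (gpol G)).[toL (phi F)])).
  exact: (congr1 (Ld (pderA g)) (toL_gev G)).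
rewrite A (Ld_phi hg) (Ld_dphi hg).
apply: LaddE; apply: LmulE1.
  exact: (esym (toL_gev (gda G))).
exact: (esym (toL_gev (gdb G))).
Qed.

Lemma toL_br (a b c d e f g h : lser F) :
  toL (ladd (lsub (lmul a b) (lmul c d)) (lsub (lmul e f) (lmul g h))) =
  (toL a * toL b - toL c * toL d) + (toL e * toL f - toL g * toL h).
Proof.
rewrite toL_add; apply: LaddE.
  by rewrite toL_sub; apply: LsubE; exact: toL_mul.
by rewrite toL_sub; apply: LsubE; exact: toL_mul.
Qed.

Lemma br_aux (A1 g h A2 B1 dg B2 dh P Q : L) :
  P = A1 * g + B1 * dg -> Q = A2 * h + B2 * dh ->
  (A1 * g - A2 * h) + (B1 * dg - B2 * dh) = P - Q.
Proof. by move=> -> ->; ring. Qed.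

Lemma key (G H : gpoly F) : posord (gev G) -> posord (gev H) ->
  forall m, lcoef (gbracket G H) m =
    pder (gev G) (lcoef (gev H) m) - pder (gev H) (lcoef (gev G) m).
Proof.
move=> pg ph m.
have E : toL (gbracket G H) =
    Ld (pderA (gev G)) (toL (gev H)) - Ld (pderA (gev H)) (toL (gev G)).
  transitivity ((toL (gev (gda H)) * toL (gev G) - toL (gev (gda G)) * toL (gev H)) +
     (toL (gev (gdb H)) * toL (lD (gev G)) - toL (gev (gdb G)) * toL (lD (gev H)))).
    exact: toL_br.
  exact: br_aux (Ld_gev pg H) (Ld_gev ph G).
exact: (congr1 (fun x => lf x m) E).
Qed.

Lemma sub00 (a b : R) : a = 0 -> b = 0 -> a - b = 0.
Proof. by move=> -> ->; rewrite subr0. Qed.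

End Main.

Theorem mainTheorem16 (F : realType) (G H : gpoly F) :
  posord (gev G) -> posord (gev H) ->
  posord (gbracket G H) /\
  forall r : Rphi F,
    pder (gev G) (pder (gev H) r) - pder (gev H) (pder (gev G) r)
    = pder (gbracket G H) r.
Proof.
move=> pg ph; split.
  move=> m hm.
  transitivity (pder (gev G) (lcoef (gev H) m) - pder (gev H) (lcoef (gev G) m)).
    exact: key.
  transitivity (pder (gev G) 0 - pder (gev H) 0).
    exact: (congr2 (fun a b => pder (gev G) a - pder (gev H) b) (ph m hm) (pg m hm)).
  exact: sub00 (pder0 _) (pder0 _).
apply: pder_comm => k; exact: (key pg ph).
Qed.
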